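(* Let $L\subseteq Q$ be a dense extension of Lie algebras such that $Q$ is a multiplicatively semiprime algebra of quotients of $L$. Then for every essential ideal $I$ of $L$, the extension $I\subseteq Q$ is dense.
   Context: Lie algebras over a commutative unital ring $\Phi$. $\mathrm{ad}_x(y)=[x,y]$; $M(Q)$ is the subalgebra of $\mathrm{End}_\Phi(Q)$ generated by the identity and all $\mathrm{ad}_x$, $x\in Q$. For a Lie subalgebra $S\subseteq Q$, the extension $S\subseteq Q$ is dense if the only $\mu\in M(Q)$ with $\mu(S)=0$ is $\mu=0$. A Lie algebra is semiprime if $[I,I]\ne0$ for each nonzero ideal $I$; $Q$ is multiplicatively semiprime if $Q$ and $M(Q)$ are semiprime. An ideal $I$ of $L$ is essential if it meets every nonzero ideal of $L$ nontrivially. $\mathrm{Ann}_L(X)=\{a\in L:[a,X]=0\}$. $Q$ is an algebra of quotients of $L$ if for every nonzero $q\in Q$ there is an ideal $J$ of $L$ with $\mathrm{Ann}_L(J)=0$ and $0\ne[J,q]\subseteq L$. *)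

(* Defs.v *)
From mathcomp Require Import all_boot all_algebra.
Set Implicit Arguments. Unset Strict Implicit. Unset Printing Implicit Defensive.
Import GRing.Theory.
Local Open Scope ring_scope.

Section Lie.
Variables (R : comPzRingType) (V : lmodType R) (br : V -> V -> V).

Definition is_lie_bracket : Prop :=
  [/\ (forall (a : R) x y z, br (a *: x + y) z = a *: br x z + br y z),
      (forall (a : R) x y z, br x (a *: y + z) = a *: br x y + br x z),
      (forall x, br x x = 0) &
      (forall x y z, br x (br y z) + br y (br z x) + br z (br x y) = 0)].

Definition submodule (S : V -> Prop) : Prop :=
  [/\ S 0, (forall x y, S x -> S y -> S (x + y)) &
      (forall (a : R) x, S x -> S (a *: x))].

Definition lie_subalgebra (S : V -> Prop) : Prop :=
  submodule S /\ (forall x y, S x -> S y -> S (br x y)).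

Definition lie_ideal (L I : V -> Prop) : Prop :=
  [/\ submodule I, (forall x, I x -> L x) &
      (forall a x, L a -> I x -> I (br a x))].

Definition nonzero_set (S : V -> Prop) : Prop := exists x, S x /\ x <> 0.

Definition essential_ideal (L I : V -> Prop) : Prop :=
  lie_ideal L I /\
  (forall J, lie_ideal L J -> nonzero_set J -> exists x, I x /\ J x /\ x <> 0).

Definition ann_zero (L X : V -> Prop) : Prop :=
  forall a, L a -> (forall x, X x -> br a x = 0) -> a = 0.

(* Lie algebra semiprime: [I,I] <> 0 for each nonzero ideal I of Q = V.
   [I,I] is the span of brackets, nonzero iff some bracket is nonzero. *)
Definition lie_semiprime : Prop :=
  forall I, lie_ideal (fun _ => True) I -> nonzero_set I ->
  exists x y, I x /\ I y /\ br x y <> 0.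

Definition ad (x : V) : V -> V := fun y => br x y.

(* M(Q): the subalgebra of End_R(V) generated by the identity and all ad_x
   (maps are identified up to extensional equality). *)
Inductive inM : (V -> V) -> Prop :=
  | inM_id : inM id
  | inM_ad x : inM (ad x)
  | inM_zero : inM (fun _ => 0)
  | inM_add f g : inM f -> inM g -> inM (fun v => f v + g v)
  | inM_scale (a : R) f : inM f -> inM (fun v => a *: f v)
  | inM_comp f g : inM f -> inM g -> inM (fun v => f (g v))
  | inM_ext f g : inM f -> (forall v, f v = g v) -> inM g.

Definition M_ideal (I : (V -> V) -> Prop) : Prop :=
  [/\ (forall f, I f -> inM f),
      I (fun _ => 0),
      (forall f g, I f -> I g -> I (fun v => f v + g v)),
      (forall (a : R) f, I f -> I (fun v => a *: f v)) &
      (forall f g, I f -> (forall v, f v = g v) -> I g)] /\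
  ((forall f m, I f -> inM m -> I (fun v => m (f v))) /\
   (forall f m, I f -> inM m -> I (fun v => f (m v)))).

Definition M_semiprime : Prop :=
  forall I, M_ideal I -> (exists f, I f /\ exists v, f v <> 0) ->
  exists f g, I f /\ I g /\ exists v, f (g v) <> 0.

Definition mult_semiprime : Prop := lie_semiprime /\ M_semiprime.

Definition dense (S : V -> Prop) : Prop :=
  forall mu, inM mu -> (forall s, S s -> mu s = 0) -> forall v, mu v = 0.

Definition algebra_of_quotients (L : V -> Prop) : Prop :=
  forall q, q <> 0 -> exists J, lie_ideal L J /\ ann_zero L J /\
    (exists j, J j /\ br j q <> 0) /\ (forall j, J j -> L (br j q)).

End Lie.

(* Main.v *)
Require Import Defs.
From mathcomp Require Import all_boot all_algebra.
Set Implicit Arguments. Unset Strict Implicit. Unset Printing Implicit Defensive.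
Import GRing.Theory.
Local Open Scope ring_scope.

Lemma br_r0 (R : comPzRingType) (V : lmodType R) (br : V -> V -> V) :
  is_lie_bracket br -> forall x, br x 0 = 0.
Proof.
case=> _ H2 _ _ x. have := H2 1 x 0 0. rewrite !scale1r !addr0 => E.
by apply: (addrI (br x 0)); rewrite addr0 -E.
Qed.

Lemma br_l0 (R : comPzRingType) (V : lmodType R) (br : V -> V -> V) :
  is_lie_bracket br -> forall x, br 0 x = 0.
Proof.
case=> H1 _ _ _ x. have := H1 1 0 0 x. rewrite !scale1r !addr0 => E.
by apply: (addrI (br 0 x)); rewrite addr0 -E.
Qed.

Lemma br_addl (R : comPzRingType) (V : lmodType R) (br : V -> V -> V) :
  is_lie_bracket br -> forall x y z, br (x + y) z = br x z + br y z.
Proof. move=> Hb x y z; case: Hb => H1 _ _ _. by have := H1 1 x y z; rewrite !scale1r. Qed.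

Lemma br_addr (R : comPzRingType) (V : lmodType R) (br : V -> V -> V) :
  is_lie_bracket br -> forall x y z, br x (y + z) = br x y + br x z.
Proof. move=> Hb x y z; case: Hb => _ H2 _ _. by have := H2 1 x y z; rewrite !scale1r. Qed.

Lemma br_scalel (R : comPzRingType) (V : lmodType R) (br : V -> V -> V) :
  is_lie_bracket br -> forall (a : R) x z, br (a *: x) z = a *: br x z.
Proof.
move=> Hb a x z. have := br_l0 Hb z. case: Hb => H1 _ _ _ H0.
by rewrite -[a *: x]addr0 H1 H0 addr0.
Qed.

Lemma br_scaler (R : comPzRingType) (V : lmodType R) (br : V -> V -> V) :
  is_lie_bracket br -> forall (a : R) x z, br x (a *: z) = a *: br x z.
Proof.
move=> Hb a x z. have := br_r0 Hb x. case: Hb => _ H2 _ _ H0.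
by rewrite -[a *: z]addr0 H2 H0 addr0.
Qed.

Lemma br_anti (R : comPzRingType) (V : lmodType R) (br : V -> V -> V) :
  is_lie_bracket br -> forall x y, br y x = - br x y.
Proof.
move=> Hb x y. have := Hb; case=> _ _ H3 _.
have := H3 (x + y). rewrite (br_addl Hb) !(br_addr Hb) H3 H3 add0r addr0 => /eqP.
by rewrite addr_eq0 => /eqP ->; rewrite opprK.
Qed.

Lemma inM_lin (R : comPzRingType) (V : lmodType R) (br : V -> V -> V) :
  is_lie_bracket br -> forall f, inM br f ->
  (forall a b, f (a + b) = f a + f b) /\ (forall (c : R) a, f (c *: a) = c *: f a).
Proof.
move=> Hb f; elim=> {f}.
- by [].
- by move=> x; split=> *; rewrite /ad ?(br_addr Hb) ?(br_scaler Hb).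
- by split=> *; rewrite ?addr0 ?scaler0.
- move=> f g _ [Fa Fs] _ [Ga Gs]; split=> *; rewrite ?Fa ?Ga ?Fs ?Gs.
    by rewrite addrACA.
  by rewrite scalerDr.
- move=> a f _ [Fa Fs]; split=> *; rewrite ?Fa ?Fs ?scalerDr //.
  by rewrite !scalerA mulrC.
- by move=> f g _ [Fa Fs] _ [Ga Gs]; split=> *; rewrite ?Ga ?Gs ?Fa ?Fs.
- move=> f g _ [Fa Fs] E; split=> *; by rewrite -!E ?Fa ?Fs.
Qed.

Lemma inM_0 (R : comPzRingType) (V : lmodType R) (br : V -> V -> V) :
  is_lie_bracket br -> forall f, inM br f -> f 0 = 0.
Proof.
move=> Hb f Hf; have [_ Fs] := inM_lin Hb Hf.
by have := Fs 0 0; rewrite !scale0r.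
Qed.

Lemma inM_N (R : comPzRingType) (V : lmodType R) (br : V -> V -> V) :
  is_lie_bracket br -> forall f, inM br f -> forall x, f (- x) = - f x.
Proof.
move=> Hb f Hf x; have [_ Fs] := inM_lin Hb Hf.
by rewrite -scaleN1r Fs scaleN1r.
Qed.

Theorem mainTheorem16 (R : comPzRingType) (V : lmodType R) (br : V -> V -> V)
  (L : V -> Prop) :
  is_lie_bracket br -> lie_subalgebra br L ->
  dense br L -> mult_semiprime br -> algebra_of_quotients br L ->
  forall I : V -> Prop, essential_ideal br L I -> dense br I.
Proof.
move=> Hb [[L0 LD LZ] Lbr] Hd [Lsp Msp] Hq I [[[I0 ID IZ] IL Ibr] Iess].
have IN : forall x, I x -> I (- x) by move=> x Ix; rewrite -scaleN1r; exact: IZ.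
have Ibr2 : forall i y, I i -> L y -> I (br i y).
  by move=> i y Ii Ly; rewrite (br_anti Hb); apply: IN; apply: Ibr.
pose T1 f := inM br f /\ forall i, I i -> f i = 0.
have dl : forall s i, T1 s -> I i -> forall v, s (br i v) = 0.
  move=> s i [Ms Ts] Ii; apply: (Hd (fun v => s (br i v))).
    exact: (inM_comp Ms (inM_ad br i)).
  by move=> y Ly; apply: Ts; apply: Ibr2.
have rc : forall m, inM br m -> forall s, T1 s -> T1 (fun v => s (m v)).
  move=> m; elim=> {m}.
  - by [].
  - move=> x s [Ms Ts]; split; first exact: (inM_comp Ms (inM_ad br x)).
    move=> i Ii; rewrite /ad (br_anti Hb) (inM_N Hb Ms).
    by rewrite (dl s i) ?oppr0.
  - move=> s [Ms Ts]; split; first exact: (inM_comp Ms (inM_zero br)).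
    by move=> *; rewrite (inM_0 Hb Ms).
  - move=> f g Mf IHf Mg IHg s [Ms Ts].
    have [Sa _] := inM_lin Hb Ms.
    split; first exact: (inM_comp Ms (inM_add Mf Mg)).
    move=> i Ii; rewrite Sa.
    by rewrite (proj2 (IHf s (conj Ms Ts)) i Ii) (proj2 (IHg s (conj Ms Ts)) i Ii) addr0.
  - move=> a f Mf IHf s [Ms Ts].
    have [_ Ss] := inM_lin Hb Ms.
    split; first exact: (inM_comp Ms (inM_scale a Mf)).
    by move=> i Ii; rewrite Ss (proj2 (IHf s (conj Ms Ts)) i Ii) scaler0.
  - move=> f g Mf IHf Mg IHg s Hs.
    exact: (IHg _ (IHf s Hs)).
  - move=> f g Mf IHf E s Hs; have [M1 T] := IHf s Hs; split.
      apply: (inM_ext M1) => v; by rewrite E.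
    by move=> i Ii; rewrite -E; apply: T.
pose C (f : V -> V) := forall s, T1 s -> forall v, s (f v) = 0.
pose B (f : V -> V) := [/\ inM br f, T1 f & C f].
have Bz : forall f, B f -> forall v, f v = 0.
  have BI : M_ideal br B.
    split; first split.
    - by move=> f [].
    - split; [exact: inM_zero | split; [exact: inM_zero | by []] |].
      by move=> s [Ms _] v; rewrite (inM_0 Hb Ms).
    - move=> f g [Mf [_ Tf] Cf] [Mg [_ Tg] Cg].
      have Mfg := inM_add Mf Mg.
      split => //; first by split => // i Ii; rewrite Tf // Tg // addr0.
      by move=> s [Ms Ts] v; rewrite (proj1 (inM_lin Hb Ms)) Cf // Cg // addr0.
    - move=> a f [Mf [_ Tf] Cf]; have Maf := inM_scale a Mf.
      split => //; first by split => // i Ii; rewrite Tf // scaler0.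
      by move=> s [Ms Ts] v; rewrite (proj2 (inM_lin Hb Ms)) Cf // scaler0.
    - move=> f g [Mf [_ Tf] Cf] E; have Mg := inM_ext Mf E.
      split => //; first by split => // i Ii; rewrite -E Tf.
      by move=> s Hs v; rewrite -E Cf.
    split.
    - move=> f m [Mf Tf Cf] Mm; have Mmf := inM_comp Mm Mf.
      split => //.
        by split => // i Ii; rewrite (proj2 Tf) // (inM_0 Hb Mm).
      by move=> s Hs v; exact: (Cf _ (rc m Mm s Hs) v).
    - move=> f m [Mf Tf Cf] Mm; have Mfm := inM_comp Mf Mm.
      split => //; first exact: rc.
      by move=> s Hs v; apply: Cf.
  move=> f Bf v; apply/eqP; apply/negPn/negP => /eqP fv.
  have [f1 [g [Bf1 [Bg [w]]]]] := Msp B BI (ex_intro _ f (conj Bf (ex_intro _ v fv))).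
  by case: Bf1 => _ Tf1 _; case: Bg => _ _ Cg; rewrite Cg.
have Hb' := Hb; case: Hb' => _ _ H3 H4.
move=> mu Mmu Hmu v.
have Hc : forall p i, I i -> br i (mu p) = 0.
  move=> p i Ii. apply: (Bz (fun v => br i (mu v))).
  split; first exact: (inM_comp (inM_ad br i) Mmu).
    by split; [exact: (inM_comp (inM_ad br i) Mmu) | move=> i' Ii'; rewrite Hmu // (br_r0 Hb)].
  by move=> s Hs w; exact: (dl s i Hs Ii (mu w)).
apply/eqP/negPn/negP => /eqP q0.
have [J [[[J0 JD JZ] JL Jbr] [_ [[j0 [Jj0 nz]] JLq]]]] := Hq _ q0.
pose A a := L a /\ forall i, I i -> br a i = 0.
have Az : A (br j0 (mu v)).
  split; first exact: JLq.
  move=> i Ii. have := H4 j0 (mu v) i.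
  rewrite [br (mu v) i](br_anti Hb) Hc // oppr0 (br_r0 Hb) add0r.
  have Iij : I (br i j0) by apply: Ibr2 => //; exact: JL.
  rewrite [br (mu v) (br i j0)](br_anti Hb) Hc // oppr0 add0r => E.
  by rewrite (br_anti Hb) E oppr0.
have AI : lie_ideal br L A.
  split.
  - split.
    + by split => // i _; rewrite (br_l0 Hb).
    + move=> a b [La Aa] [Lb Ab]; split; first exact: LD.
      by move=> i Ii; rewrite (br_addl Hb) Aa // Ab // addr0.
    + move=> c a [La Aa]; split; first exact: LZ.
      by move=> i Ii; rewrite (br_scalel Hb) Aa // scaler0.
  - by move=> a [].
  - move=> y a Ly [La Aa]; split; first exact: Lbr.
    move=> i Ii; have := H4 y a i.
    rewrite Aa // (br_r0 Hb) add0r.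
    have Iiy : I (br i y) by apply: Ibr2.
    rewrite Aa // add0r => E.
    by rewrite (br_anti Hb) E oppr0.
have [x [Ix [[Lx Ax] x0]]] := Iess A AI (ex_intro _ _ (conj Az nz)).
have adx : forall w, br x w = 0.
  apply: (Bz (ad br x)); split; first exact: inM_ad.
    by split; [exact: inM_ad | exact: Ax].
  by move=> s Hs w; exact: (dl s x Hs Ix w).
pose Z y := forall w, br y w = 0.
have ZI : lie_ideal br (fun _ => True) Z.
  split => //.
  - split.
    + by move=> w; rewrite (br_l0 Hb).
    + by move=> a b Za Zb w; rewrite (br_addl Hb) Za Zb addr0.
    + by move=> c a Za w; rewrite (br_scalel Hb) Za scaler0.
  - by move=> a y _ Zy w; rewrite [br a y](br_anti Hb) Zy oppr0 (br_l0 Hb).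
have [x1 [y1 [Zx1 [_ ne]]]] := Lsp Z ZI (ex_intro _ x (conj adx x0)).
by apply: ne; apply: Zx1.
Qed.
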